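(* Let $(X,\mathcal{A},\mu)$ be a probability space and let $\{E_i\}_{i\in\mathbb{N}}$ be a sequence of sets in $\mathcal{A}$. Suppose that $$\sum_{i=1}^\infty \mu(E_i)=\infty,$$ and that there exists a constant $C>0$ such that $$\sum_{s,t=1}^Q \mu(E_s\cap E_t)\le C\Big(\sum_{s=1}^Q\mu(E_s)\Big)^2\quad\text{for infinitely many }Q\in\mathbb{N}.$$ Suppose in addition that condition (M1) holds. Then $\mu(E_\infty)=1$.
   Context: $E_\infty:=\limsup_{i\to\infty}E_i=\bigcap_{t=1}^\infty\bigcup_{i=t}^\infty E_i$. Condition (M1): for every $\delta>0$ and all natural numbers $q_1<q_2$ there exists $i_0=i_0(q_1,q_2,\delta)$ such that for all $i\ge i_0$, $$\mu(A\cap E_i)\le(1+\delta)\mu(A)\mu(E_i),\qquad\text{where } A=\bigcup_{j=q_1}^{q_2}E_j.$$ *)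

(* Defs.v *)
From HB Require Import structures.
From mathcomp Require Import all_boot all_order all_algebra.
From mathcomp Require Import all_classical all_reals all_analysis.

(* Main.v *)
Require Import Defs.
From HB Require Import structures.
From mathcomp Require Import all_boot all_order all_algebra.
From mathcomp Require Import all_classical all_reals all_analysis.
From mathcomp Require Import measurable_realfun.
From mathcomp Require Import ring lra.
Import Order.TTheory GRing.Theory Num.Theory.
Local Open Scope classical_set_scope.
Local Open Scope ring_scope.

Section CE.
Context {d : measure_display} {T : measurableType d} {R : realType}
  (mu : {measure set T -> \bar R}).
Local Open Scope ereal_scope.

Lemma msum (n : nat) (h : 'I_n -> T -> \bar R) :
  (forall i, measurable_fun [set: T] (h i)) ->
  measurable_fun [set: T] (fun x => \sum_(i < n) h i x).
Proof. move=> mh; exact: emeasurable_sum. Qed.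

Lemma msumI n (F : 'I_n -> set T) : (forall i, measurable (F i)) ->
  measurable_fun [set: T] (fun x => \sum_(t < n) (\1_(F t) x : R)%:E).
Proof.
move=> mF.
apply: (eq_measurable_fun (fun x => \sum_(t <- index_enum 'I_n) (\1_(F t) x : R)%:E)) => [x _|]; first by rewrite big_mkcond.
apply: emeasurable_sum => t.
by apply/measurable_EFinP; exact: measurable_indic.
Qed.

Lemma msumI' n (F : 'I_n -> set T) (g : T -> \bar R) : (forall i, measurable (F i)) ->
  (forall x, \sum_(t < n) (\1_(F t) x : R)%:E = g x) -> measurable_fun [set: T] g.
Proof.
move=> mF hg; apply: (eq_measurable_fun (fun x => \sum_(t < n) (\1_(F t) x : R)%:E)) => [x _|]; first exact: hg.
exact: msumI.
Qed.

Lemma chung_erdos (B : nat -> set T) (mB : forall i, measurable (B i))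
  (n : nat) (l : R) : (0 <= l)%R ->
  (2 * l)%:E * \sum_(i < n) mu (B i) <=
   (l ^+ 2)%:E * \sum_(s < n) \sum_(t < n) mu (B s `&` B t)
   + mu (\bigcup_(i in [set i | (i < n)%N]) B i).
Proof.
move=> l0.
set U := \bigcup_(i in _) B i.
have mU : measurable U by apply: bigcup_measurable => k _; exact: mB.
have mI : forall A : set T, measurable A -> measurable_fun [set: T] (fun x : T => ((\1_A x : R)%:E : \bar R)).
  by move=> A mA; apply/measurable_EFinP; exact: measurable_indic.
have Hl : \sum_(i < n) mu (B i) =
    \int[mu]_x (\sum_(i < n) (\1_(B i) x : R)%:E).
  rewrite ge0_integral_sum//; last by move=> k; exact: mI.
  by apply: eq_bigr => i _; rewrite integral_indic// setIT.
have Hr : \sum_(s < n) \sum_(t < n) mu (B s `&` B t) =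
    \int[mu]_x (\sum_(s < n) \sum_(t < n) (\1_(B s `&` B t) x : R)%:E).
  rewrite ge0_integral_sum//; last first.
    by move=> k x _; apply: sume_ge0 => t _; rewrite lee_fin.
  1: by move=> k; apply: (msumI n (fun t : 'I_n => B k `&` B t)) => t; exact: measurableI.
  apply: eq_bigr => s _.
  rewrite ge0_integral_sum//; last first.
    by move=> t; apply: mI; exact: measurableI.
  by apply: eq_bigr => t _; rewrite integral_indic ?setIT//; exact: measurableI.
have HU : mu U = \int[mu]_x (\1_U x : R)%:E by rewrite integral_indic// setIT.
have mS1 : measurable_fun [set: T] (fun x => \sum_(i < n) (\1_(B i) x : R)%:E).
  by apply: (msumI n (fun i : 'I_n => B i)) => i.
have mS2 : measurable_fun [set: T] (fun x => \sum_(s < n) \sum_(t < n) (\1_(B s `&` B t) x : R)%:E).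
  apply: (eq_measurable_fun (fun x => \sum_(s <- index_enum 'I_n) \sum_(t < n) (\1_(B s `&` B t) x : R)%:E)) => [x _|]; first by rewrite big_mkcond.
  apply: emeasurable_sum => s.
  by apply: (msumI n (fun t : 'I_n => B s `&` B t)) => t; exact: measurableI.
have S10 : forall x, 0 <= \sum_(i < n) (\1_(B i) x : R)%:E.
  by move=> x; apply: sume_ge0 => i _; rewrite lee_fin.
have S20 : forall x, 0 <= \sum_(s < n) \sum_(t < n) (\1_(B s `&` B t) x : R)%:E.
  by move=> x; apply: sume_ge0 => s _; apply: sume_ge0 => t _; rewrite lee_fin.
have H : \int[mu]_x ((2 * l)%:E * \sum_(i < n) (\1_(B i) x : R)%:E) <=
    \int[mu]_x ((l ^+ 2)%:E * \sum_(s < n) \sum_(t < n) (\1_(B s `&` B t) x : R)%:E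
       + (\1_U x : R)%:E).
  apply: ge0_le_integral => //.
  - by move=> x _; apply: mule_ge0 => //; rewrite lee_fin mulr_ge0.
  - exact: measurable_funeM.
  - by apply: emeasurable_funD; [exact: measurable_funeM| exact: mI].
  move=> x _.
  under [X in _ <= (_ * X + _)]eq_bigr do rewrite sumEFin.
  rewrite !sumEFin -!EFinM -EFinD lee_fin.
  set k := (\sum_(i < n) (\1_(B i) x : R))%R.
  have -> : (\sum_(s < n) \sum_(t < n) (\1_(B s `&` B t) x : R) = k ^+ 2)%R.
    rewrite expr2 /k big_distrl /=; apply: eq_bigr => s _.
    rewrite big_distrr /=; apply: eq_bigr => t _.
    by rewrite indicI.
  have [Ux|Ux] := pselect (U x).
  - rewrite indicE mem_set//.
    have := sqr_ge0 (l * k - 1)%R.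
    rewrite !expr2 /=; nra.
  - have -> : k = 0%R.
      rewrite /k big1// => i _; rewrite indicE memNset//.
      by move=> Bx; apply: Ux; exists (nat_of_ord i) => //=.
    by rewrite indicE memNset// !mulr0 expr0n/= mulr0 add0r.
rewrite ge0_integralD// in H; last 3 first.
- by move=> x _; apply: mule_ge0 => //; rewrite lee_fin exprn_ge0.
- exact: measurable_funeM.
- exact: mI.
rewrite !ge0_integralZl// in H; try by rewrite lee_fin ?exprn_ge0 ?mulr_ge0.
by rewrite Hl Hr HU.
Qed.
End CE.

Section Prob.
Context {d : measure_display} {T : measurableType d} {R : realType}
  (mu : probability T R).

Definition pr (A : set T) : R := fine (mu A).

Lemma prE A : measurable A -> mu A = (pr A)%:E.
Proof. by move=> mA; rewrite /pr fineK// fin_num_measure. Qed.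

Lemma pr_ge0 A : 0 <= pr A.
Proof. exact/fine_ge0/measure_ge0. Qed.

Lemma pr_le1 A : measurable A -> pr A <= 1.
Proof. by move=> mA; rewrite -lee_fin -prE// probability_le1. Qed.

Lemma pr_le A B : measurable A -> measurable B -> A `<=` B -> pr A <= pr B.
Proof.
move=> mA mB AB; rewrite -lee_fin -!prE//.
by apply: le_measure => //; rewrite inE.
Qed.

Lemma prD A B : measurable A -> measurable B ->
  pr (A `\` B) = pr A - pr (A `&` B).
Proof.
move=> mA mB.
have h := measureD (mu:=mu) mA mB (le_lt_trans (probability_le1 mu mA) (ltry 1)).
apply: EFin_inj; rewrite EFinB -!prE//; [exact: measurableI|exact: measurableD].
Qed.

End Prob.
Theorem theorem1 (d : measure_display) (T : measurableType d) (R : realType)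
  (mu : probability T R) (E : nat -> set T)
  (mE : forall i, measurable (E i))
  (hdiv : (\sum_(0 <= i <oo) mu (E i) = +oo)%E)
  (hqi : exists C : R, 0 < C /\
     forall N : nat, exists Q : nat, (N <= Q)%N /\
       (\sum_(s < Q) \sum_(t < Q) mu (E s `&` E t)
          <= C%:E * ((\sum_(s < Q) mu (E s)) * (\sum_(s < Q) mu (E s))))%E)
  (hM1 : forall delta : R, 0 < delta -> forall q1 q2 : nat, (q1 < q2)%N ->
     exists i0 : nat, forall i : nat, (i0 <= i)%N ->
       let A := \bigcup_(j in [set j : nat | (q1 <= j <= q2)%N]) E j in
       (mu (A `&` E i) <= (1 + delta)%:E * mu A * mu (E i))%E) :
  mu (lim_sup_set E) = 1%E.
Proof.
case: hqi => C [C0 hQ].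
pose m i := pr mu (E i).
pose S n := \sum_(0 <= i < n) m i.
have m0 i : 0 <= m i by exact: pr_ge0.
have Smono a b : (a <= b)%N -> S a <= S b.
  move=> ab; rewrite /S [X in _ <= X](@big_cat_nat _ _ _ a) //= lerDl.
  by apply: sumr_ge0 => i _.
have sumE n : (\sum_(i < n) mu (E i))%E = (S n)%:E.
  rewrite /S big_mkord -sumEFin; apply: eq_bigr => i _; exact: prE.
have Sbig M : exists N, M <= S N.
  apply: contrapT => H.
  have : (\sum_(0 <= i <oo) mu (E i) <= M%:E)%E.
    apply: lime_le; first exact: is_cvg_nneseries.
    apply: nearW => n; rewrite big_mkord sumE lee_fin leNgt; apply/negP => h.
    by apply: H; exists n; exact: ltW.
  by rewrite hdiv leye_eq.
have hQ' N : exists Q, (N <= Q)%N /\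
    \sum_(s < Q) \sum_(t < Q) pr mu (E s `&` E t) <= C * (S Q * S Q).
  have [Q [NQ HQ]] := hQ N; exists Q; split => //.
  rewrite !sumE in HQ.
  rewrite -lee_fin EFinM EFinM -sumEFin.
  apply: le_trans HQ; rewrite le_eqVlt; apply/orP; left; apply/eqP; apply: eq_bigr => s _.
  rewrite -sumEFin; apply: eq_bigr => t _; apply/esym/prE; exact: measurableI.
pose U q := \bigcup_(j >= q) E j.
have mU q : measurable (U q) by apply: bigcup_measurable => k _.
have claim q1 : pr mu (U q1) = 1.
  set a := pr mu (U q1).
  apply/eqP; rewrite eq_le pr_le1 //=.
  rewrite leNgt; apply/negP => a1.
  have a0 : 0 <= a by exact: pr_ge0.
  set g := (1 - a) / 2.
  have g0 : 0 < g by rewrite /g; lra.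
  set c := g ^+ 2 / (4 * C).
  have c0 : 0 < c by rewrite /c divr_gt0 ?exprn_gt0 //; lra.
  pose A q2 := \bigcup_(j in [set j : nat | (q1 <= j <= q2)%N]) E j.
  have mA q2 : measurable (A q2) by apply: bigcup_measurable => k _.
  have AU q2 : A q2 `<=` U q1 by move=> x [j /= /andP[hj _] Ej]; exists j.
  have Amono q q' : (q <= q')%N -> A q `<=` A q'.
    move=> qq x [j /= /andP[hj hj'] Ej]; exists j => //=.
    by rewrite hj /= (leq_trans hj' qq).
  have bigA : \bigcup_n A n = U q1.
    apply/seteqP; split => x.
      by move=> [n _ ]; exact: AU.
    move=> [j /= hj Ej]; exists j => //; exists j => //=.
    by rewrite hj leqnn.
  have cvgA : (mu \o A) @ \oo --> mu (U q1).
    rewrite -bigA; apply: nondecreasing_cvg_mu => //.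
    - by rewrite bigA.
    - by move=> n k nk; apply/subsetPset; exact: Amono.
  have [q2 Hq2] : exists q2, a - c < pr mu (A q2).
    apply: contrapT => H.
    have : (a%:E <= (a - c)%:E)%E.
      rewrite /a -prE// -(cvg_lim _ cvgA)//.
      apply: lime_le; first by apply/cvg_ex; eexists; exact: cvgA.
      apply: nearW => n /=; rewrite prE// lee_fin leNgt; apply/negP => h.
      by apply: H; exists n.
    by rewrite lee_fin; lra.
  pose q2' := maxn q2 q1.+1.
  have q12 : (q1 < q2')%N by rewrite /q2' leq_max leqnn orbT.
  have Aq : a - c < pr mu (A q2').
    apply: (lt_le_trans Hq2); apply: pr_le => //; apply: Amono.
    by rewrite /q2' leq_max leqnn.
  set AA := A q2'.
  have mAA : measurable AA by exact: mA.
  have AAa : pr mu AA <= a by apply: pr_le => //; exact: AU.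
  have [i0 Hi0] := hM1 g g0 q1 q2' q12.
  set i1 := maxn i0 q1.
  have [N HN] := Sbig (2 * S i1 + 1).
  have [Q [NQ HQ]] := hQ' (maxn N i1).
  have SQ : 2 * S i1 + 1 <= S Q.
    apply: (le_trans HN); apply: Smono; apply: leq_trans NQ.
    by rewrite leq_max leqnn.
  have i1Q : (i1 <= Q)%N by apply: leq_trans NQ; rewrite leq_max leqnn orbT.
  pose B i := if (i1 <= i)%N then E i `\` AA else set0.
  have mB i : measurable (B i).
    by rewrite /B; case: ifP => _ //; exact: measurableD.
  have pAA0 : 0 <= pr mu AA by exact: pr_ge0.
  have hb1 i : (i1 <= i)%N -> g * m i <= pr mu (B i).
    move=> hi; rewrite /B hi prD//.
    have hi0 : (i0 <= i)%N by apply: leq_trans hi; rewrite leq_max leqnn.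
    have h := Hi0 i hi0; rewrite /= in h.
    rewrite (prE mu _ (measurableI _ _ mAA (mE i))) (prE mu _ mAA) (prE mu _ (mE i)) in h.
    rewrite -!EFinM lee_fin in h.
    rewrite setIC; rewrite -/(m i) in h *.
    have := m0 i => mi0.
    have h1 : 0 <= m i * ((1 + g) * (a - pr mu AA)) by apply: mulr_ge0 => //; apply: mulr_ge0; lra.
    have h2 : 0 <= m i * (g * (1 - a)) by apply: mulr_ge0 => //; apply: mulr_ge0; lra.
    rewrite /g in h h1 h2 *; nra.
  have hb2 : g * (S Q - S i1) <= \sum_(i < Q) pr mu (B i).
    rewrite -(big_mkord xpredT (fun i => pr mu (B i))).
    rewrite (@big_cat_nat _ _ _ i1) //=.
    have -> : \sum_(0 <= i < i1) pr mu (B i) = 0.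
      rewrite big_nat_cond big1 // => i /andP[/andP[_ hi] _].
      by rewrite /B leqNgt hi /= /pr measure0.
    have -> : S Q - S i1 = \sum_(i1 <= i < Q) m i.
      by rewrite /S (@big_cat_nat _ _ _ i1 0 Q) //= addrC addrK.
    rewrite add0r mulr_sumr; apply: ler_sum_nat => i /andP[hi _].
    exact: hb1.
  have ha : \sum_(s < Q) \sum_(t < Q) pr mu (B s `&` B t) <= C * (S Q * S Q).
    apply: le_trans HQ; apply: ler_sum => s _; apply: ler_sum => t _.
    apply: pr_le; try exact: measurableI.
    move=> x [Bs Bt]; split.
      by move: Bs; rewrite /B; case: ifP => // _ [].
    by move: Bt; rewrite /B; case: ifP => // _ [].
  have mUB : measurable (\bigcup_(i in [set i | (i < Q)%N]) B i).
    by apply: bigcup_measurable => k _.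
  have hc : pr mu (\bigcup_(i in [set i | (i < Q)%N]) B i) <= a - pr mu AA.
    have -> : a - pr mu AA = pr mu (U q1 `\` AA).
      by rewrite prD// setIidr//; exact: AU.
    apply: pr_le => //; first exact: measurableD.
    move=> x [i /= iQ]; rewrite /B; case: ifP => // hi [Ex nAA]; split => //.
    by exists i => //=; apply: leq_trans hi; rewrite leq_max leqnn orbT.
  have Si10 : 0 <= S i1 by apply: sumr_ge0 => i _.
  have hSQ : 0 < S Q by lra.
  pose k := g / (2 * C).
  pose l := k / S Q.
  have k0 : 0 < k by rewrite /k divr_gt0 //; lra.
  have l0 : 0 <= l by rewrite /l divr_ge0 //; lra.
  have hce := chung_erdos mu B mB Q l l0.
  have e1 : (\sum_(i < Q) mu (B i))%E = (\sum_(i < Q) pr mu (B i))%:E.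
    by rewrite -sumEFin; apply: eq_bigr => i _; exact: prE.
  have e2 : (\sum_(s < Q) \sum_(t < Q) mu (B s `&` B t))%E =
      (\sum_(s < Q) \sum_(t < Q) pr mu (B s `&` B t))%:E.
    rewrite -sumEFin; apply: eq_bigr => s _.
    by rewrite -sumEFin; apply: eq_bigr => t _; apply: prE; exact: measurableI.
  have e3 : mu (\bigcup_(i in [set i | (i < Q)%N]) B i) =
    (pr mu (\bigcup_(i in [set i | (i < Q)%N]) B i))%:E := prE mu _ mUB.
  rewrite e1 e2 in hce.
  set M := (X in (_ <= _ + X)%E) in hce.
  have eM : M = (pr mu (\bigcup_(i in [set i | (i < Q)%N]) B i))%:E by exact: e3.
  rewrite eM -!EFinM -EFinD lee_fin in hce.
  set X := \sum_(i < Q) pr mu (B i) in hb2 hce.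
  set Y := \sum_(s < Q) \sum_(t < Q) pr mu (B s `&` B t) in ha hce.
  set P := pr mu _ in hc hce.
  have F1 : l * S Q = k by rewrite /l divfK // gt_eqF.
  have F2 : k * g = 2 * c.
    by rewrite /k /c; field; rewrite gt_eqF.
  have F3 : k * k * C = c by rewrite /k /c; field; rewrite gt_eqF.
  have e1' : 2 * c <= 2 * l * X.
    have : g * S Q <= 2 * X.
      have h3 : 0 <= g * S Q - 2 * (g * S i1).
        by rewrite mulrCA -mulrBr; apply: mulr_ge0; lra.
      have h4 : g * S Q - g * S i1 <= X by rewrite -mulrBr.
      lra.
    move=> h; have := ler_wpM2l l0 h.
    have -> : l * (g * S Q) = k * g by rewrite -F1; ring.
    by rewrite F2 => h'; apply: (le_trans h'); rewrite mulrCA mulrA.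
  have e2' : l ^+ 2 * Y <= c.
    have := ler_wpM2l (exprn_ge0 2 l0) ha.
    have -> : l ^+ 2 * (C * (S Q * S Q)) = k * k * C by rewrite -F1; ring.
    by rewrite F3.
  have : 2 * c < 2 * c by lra.
  by rewrite ltxx.
have H1 : (fun n => mu (\bigcup_(k >= n) E k)) = (fun _ => 1%E).
  by apply: funext => n; have := claim n; rewrite /U => <-; apply: prE; exact: (mU n).
have := lim_sup_set_cvg mu E mE (le_lt_trans (probability_le1 mu (mU 0%N)) (ltry 1)).
rewrite H1 => /cvg_lim <-//; exact: lim_cst.
Qed.
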